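(* Let $\Lambda,\delta>0$ and $T=L(\Lambda+1)\delta$ with $L\in\mathbb N$. The minimizers of $\mathcal F^T_0$ in $\mathscr A^{T,\Lambda,\delta}$ are exactly the functions $\bar u(\cdot-x_0)-\frac{\Lambda\delta}2$ with $x_0\in\mathbb R$.
   Context: The admissible class $\mathscr A^{T,\Lambda,\delta}$ is the set of continuous, $T$-periodic, piecewise affine functions $u:\mathbb R\to\mathbb R$ with $u'\in\{1,-\Lambda\}$ a.e., such that $(u')^{-1}(\{-\Lambda\})=\bigcup_{k\in\mathbb N}I^k$ for some intervals $I^k$ with $|I^k|=\delta$ for all $k$ and $\#(I^i\cap I^j)\le1$ for all $i\ne j$. The functional is $\mathcal F^T_0(u):=\frac1{2T}\int_0^T|u(x)|^2\,dx$. $\bar u$ is the $(\Lambda+1)\delta$-periodic function defined on $(-\delta,\Lambda\delta]$ by $\bar u(x)=-\Lambda x$ for $-\delta<x<0$ and $\bar u(x)=x$ for $0\le x\le\Lambda\delta$. *)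

(* Defs.v *)
From Stdlib Require Import Reals Lra.
From Coquelicot Require Import Coquelicot.
Open Scope R_scope.

Definition periodic (T : R) (u : R -> R) : Prop :=
  forall x, u (x + T) = u x.

Definition piecewise_affine (u : R -> R) : Prop :=
  forall a b, a < b ->
    exists (n : nat) (t : nat -> R),
      t 0%nat = a /\ t n = b /\
      (forall i, (i < n)%nat -> t i < t (S i)) /\
      (forall i, (i < n)%nat -> exists m c,
          forall x, t i <= x <= t (S i) -> u x = m * x + c).

Definition in_Ival (delta a x : R) : Prop := a <= x <= a + delta.

(* The admissible class A^{T,Lambda,delta}.  The a.e. statements are read at
   points of differentiability (the complement is locally finite, hence null). *)
Definition admissible (T Lambda delta : R) (u : R -> R) : Prop :=
  continuity u /\ periodic T u /\ piecewise_affine u /\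
  (forall x l, derivable_pt_lim u x l -> l = 1 \/ l = - Lambda) /\
  exists I : nat -> R,
    (forall i j, i <> j -> forall x y,
        in_Ival delta (I i) x -> in_Ival delta (I j) x ->
        in_Ival delta (I i) y -> in_Ival delta (I j) y -> x = y) /\
    (forall x l, derivable_pt_lim u x l ->
        (l = - Lambda <-> exists k, in_Ival delta (I k) x)).

Definition F0 (T : R) (u : R -> R) : R :=
  / (2 * T) * RInt (fun x => (u x) ^ 2) 0 T.

Definition is_minimizer (T Lambda delta : R) (u : R -> R) : Prop :=
  admissible T Lambda delta u /\
  forall v, admissible T Lambda delta v -> F0 T u <= F0 T v.

(* Representative of x modulo P=(Lambda+1)delta in (-delta, Lambda*delta]. *)
Definition ubar_red (Lambda delta x : R) : R :=
  let P := (Lambda + 1) * delta in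
  Lambda * delta - P * frac_part ((Lambda * delta - x) / P).

Definition ubar (Lambda delta x : R) : R :=
  let y := ubar_red Lambda delta x in
  if Rlt_dec y 0 then - Lambda * y else y.

(* Main.v *)
Require Import Defs.
From Stdlib Require Import Reals Lra Lia Classical ClassicalEpsilon FunctionalExtensionality ZArith.
From Coquelicot Require Import Coquelicot.
Open Scope R_scope.


Lemma loc_aff_deriv (u : R -> R) a b m c p :
  a < p < b -> (forall x, a <= x <= b -> u x = m * x + c) -> derivable_pt_lim u p m.
Proof.
  intros Hp Hu eps Heps.
  assert (Hd : 0 < Rmin (p - a) (b - p)) by (apply Rmin_pos; lra).
  exists (mkposreal _ Hd). intros h Hh0 Hh. simpl in Hh.
  assert (Hh1: Rabs h < p - a) by (eapply Rlt_le_trans; [exact Hh| apply Rmin_l]).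
  assert (Hh2: Rabs h < b - p) by (eapply Rlt_le_trans; [exact Hh| apply Rmin_r]).
  destruct (Rabs_def2 _ _ Hh1). destruct (Rabs_def2 _ _ Hh2).
  rewrite (Hu (p+h)) by lra. rewrite (Hu p) by lra.
  replace ((m*(p+h)+c - (m*p+c))/h - m) with 0 by (field; auto).
  rewrite Rabs_R0; lra.
Qed.

Lemma eq_of_close (l m : R) : (forall eps, 0 < eps -> Rabs (m - l) < eps) -> l = m.
Proof.
  intros H. destruct (Req_dec l m) as [E|E]; auto.
  assert (0 < Rabs (m - l)) by (apply Rabs_pos_lt; lra).
  specialize (H _ H0). lra.
Qed.

Lemma deriv_right (u : R->R) x eta m c l : 0 < eta ->
  (forall y, x <= y <= x + eta -> u y = m*y + c) -> derivable_pt_lim u x l -> l = m.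
Proof.
  intros He Hu Hd. apply eq_of_close. intros eps Heps.
  destruct (Hd eps Heps) as [d Hdd].
  set (h := Rmin (d/2) eta).
  assert (0 < h) by (apply Rmin_pos; destruct d; simpl; lra).
  assert (h <= d/2) by apply Rmin_l. assert (h <= eta) by apply Rmin_r.
  assert (Rabs h < d) by (rewrite Rabs_right; destruct d; simpl in *; lra).
  specialize (Hdd h ltac:(lra) H2).
  rewrite (Hu (x+h)) in Hdd by lra. rewrite (Hu x) in Hdd by lra.
  replace ((m*(x+h)+c - (m*x+c))/h - l) with (m - l) in Hdd by (field; lra). exact Hdd.
Qed.

Lemma deriv_left (u : R->R) x eta m c l : 0 < eta ->
  (forall y, x - eta <= y <= x -> u y = m*y + c) -> derivable_pt_lim u x l -> l = m.
Proof.
  intros He Hu Hd. apply eq_of_close. intros eps Heps.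
  destruct (Hd eps Heps) as [d Hdd].
  set (h := Rmin (d/2) eta).
  assert (0 < h) by (apply Rmin_pos; destruct d; simpl; lra).
  assert (h <= d/2) by apply Rmin_l. assert (h <= eta) by apply Rmin_r.
  assert (Rabs (-h) < d) by (rewrite Rabs_left; destruct d; simpl in *; lra).
  specialize (Hdd (-h) ltac:(lra) H2).
  rewrite (Hu (x+-h)) in Hdd by lra. rewrite (Hu x) in Hdd by lra.
  replace ((m*(x+-h)+c - (m*x+c))/(-h) - l) with (m - l) in Hdd by (field; lra). exact Hdd.
Qed.

Lemma part_mono (t : nat -> R) n : (forall i, (i < n)%nat -> t i < t (S i)) ->
  forall j, (j <= n)%nat -> t 0%nat <= t j /\ t j <= t n.
Proof.
  intros Hinc j Hj. split.
  - induction j. lra. specialize (Hinc j ltac:(lia)). specialize (IHj ltac:(lia)). lra.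
  - remember (n - j)%nat as d. assert (j = n - d)%nat by lia. subst j. clear Heqd Hj.
    induction d. replace (n - 0)%nat with n by lia; lra.
    destruct (Nat.le_gt_cases n d).
    + replace (n - S d)%nat with (n - d)%nat by lia. auto.
    + specialize (Hinc (n - S d)%nat ltac:(lia)). replace (S (n - S d)) with (n - d)%nat in Hinc by lia. lra.
Qed.

Lemma PA_slope u a b m : piecewise_affine u -> a < b ->
  (forall t l, a < t < b -> derivable_pt_lim u t l -> l = m) ->
  forall x, a <= x <= b -> u x = u a + m * (x - a).
Proof.
  intros Hpa Hab Hd.
  destruct (Hpa a b Hab) as [n [t [H0 [Hn [Hinc Haff]]]]].
  assert (Hm := part_mono t n Hinc).
  assert (forall j, (j <= n)%nat -> forall x, a <= x <= t j -> u x = u a + m * (x - a)).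
  { induction j; intros Hj x Hx.
    - rewrite H0 in Hx. replace x with a by lra. ring.
    - destruct (Rle_lt_dec x (t j)). apply IHj; lia || lra.
      destruct (Haff j ltac:(lia)) as [mj [cj Hc]].
      assert (mj = m).
      { apply (Hd ((t j + t (S j))/2)).
        - destruct (Hm j ltac:(lia)). destruct (Hm (S j) ltac:(lia)).
          specialize (Hinc j ltac:(lia)). lra.
        - eapply loc_aff_deriv; [| exact Hc]. specialize (Hinc j ltac:(lia)). lra. }
      subst mj. destruct (Hm j ltac:(lia)).
      assert (Htj : u (t j) = u a + m * (t j - a)) by (apply IHj; lia || lra).
      specialize (Hinc j ltac:(lia)).
      rewrite Hc by lra. rewrite Hc in Htj by lra. lra. }
  intros x Hx. apply (H n); lia || lra.
Qed.


Record setting (Lam del T : R) (u : R -> R) (I : nat -> R) : Prop := {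
  s_Lam : 0 < Lam; s_del : 0 < del; s_T : 0 < T;
  s_cont : continuity u; s_per : periodic T u; s_pa : piecewise_affine u;
  s_der : forall x l, derivable_pt_lim u x l -> l = 1 \/ l = - Lam;
  s_sep : forall i j, i <> j -> forall x y, in_Ival del (I i) x -> in_Ival del (I j) x ->
        in_Ival del (I i) y -> in_Ival del (I j) y -> x = y;
  s_iff : forall x l, derivable_pt_lim u x l -> (l = - Lam <-> exists k, in_Ival del (I k) x) }.

Definition free (del : R) (I : nat -> R) a b :=
  forall t, a < t < b -> forall k, ~ in_Ival del (I k) t.

Section S.
Context (Lam del T : R) (u : R -> R) (I : nat -> R) (H : setting Lam del T u I).

Lemma sep_dist i j : i <> j -> del <= Rabs (I i - I j).
Proof.
  intros Hij. destruct (Rle_or_lt del (Rabs (I i - I j))) as [h|h]; auto. exfalso.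
  destruct (Rabs_def2 _ _ h).
  destruct (Rle_lt_dec (I i) (I j)).
  - assert (I j = I i + del) by (apply (s_sep _ _ _ _ _ H i j Hij); unfold in_Ival; lra). lra.
  - assert (I i = I j + del) by (apply (s_sep _ _ _ _ _ H i j Hij); unfold in_Ival; lra). lra.
Qed.

Lemma desc k x : I k <= x <= I k + del -> u x = u (I k) - Lam * (x - I k).
Proof.
  intros Hx. pose proof (s_del _ _ _ _ _ H).
  rewrite (PA_slope u (I k) (I k + del) (- Lam) (s_pa _ _ _ _ _ H)); auto; try lra.
  intros t l Ht Hl. apply (s_iff _ _ _ _ _ H t l Hl). exists k. unfold in_Ival; lra.
Qed.

Lemma asc a b x : free del I a b -> a < b -> a <= x <= b -> u x = u a + (x - a).
Proof.
  intros Hf Hab Hx.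
  rewrite (PA_slope u a b 1 (s_pa _ _ _ _ _ H)); auto; try lra.
  intros t l Ht Hl. destruct (s_der _ _ _ _ _ H t l Hl); auto.
  exfalso. destruct (proj1 (s_iff _ _ _ _ _ H t l Hl) H0) as [k Hk]. exact (Hf t Ht k Hk).
Qed.

Lemma der_desc k t : I k < t < I k + del -> derivable_pt_lim u t (- Lam).
Proof.
  intros Ht. apply (loc_aff_deriv u (I k) (I k + del) (-Lam) (u (I k) + Lam * I k)); auto.
  intros x Hx. rewrite (desc k x Hx). ring.
Qed.

Lemma der_free a b t : free del I a b -> a < t < b -> derivable_pt_lim u t 1.
Proof.
  intros Hf Ht. apply (loc_aff_deriv u a b 1 (u a - a)); auto.
  intros x Hx. rewrite (asc a b x Hf) by lra. ring.
Qed.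

Lemma free_of_der1 a b : (forall t, a < t < b -> derivable_pt_lim u t 1) -> free del I a b.
Proof.
  intros Hd t Ht k Hk. pose proof (s_Lam _ _ _ _ _ H).
  assert (1 = - Lam) by (apply (s_iff _ _ _ _ _ H t 1 (Hd t Ht)); eauto). lra.
Qed.

Lemma per_pt x : u (x + T) = u x.
Proof. apply (s_per _ _ _ _ _ H). Qed.

Lemma per_pt_n n x : u (x + INR n * T) = u x.
Proof.
  induction n. simpl. rewrite Rmult_0_l, Rplus_0_r. auto.
  rewrite S_INR. replace (x + (INR n + 1) * T) with ((x + INR n * T) + T) by ring.
  rewrite per_pt. auto.
Qed.

Lemma per_der_n n t l : derivable_pt_lim u t l -> derivable_pt_lim u (t + INR n * T) l.
Proof.
  intros Hd eps Heps. destruct (Hd eps Heps) as [d Hdd]. exists d. intros h Hh0 Hh.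
  replace (t + INR n * T + h) with ((t + h) + INR n * T) by ring.
  rewrite !per_pt_n. auto.
Qed.

Lemma per_der_inv t l : derivable_pt_lim u (t + T) l -> derivable_pt_lim u t l.
Proof.
  intros Hd eps Heps. destruct (Hd eps Heps) as [d Hdd]. exists d. intros h Hh0 Hh.
  specialize (Hdd h Hh0 Hh).
  replace (t + T + h) with ((t + h) + T) in Hdd by ring.
  rewrite !per_pt in Hdd. auto.
Qed.

Lemma per_der t l : derivable_pt_lim u t l -> derivable_pt_lim u (t + T) l.
Proof.
  intros Hd. pose proof (per_der_n 1 t l Hd). simpl in H0. rewrite Rmult_1_l in H0. auto.
Qed.

Lemma exists_start_above y : exists k, y <= I k.
Proof.
  pose proof (s_del _ _ _ _ _ H). pose proof (s_T _ _ _ _ _ H).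
  destruct (INR_archimed T (y - I 0%nat + del) H1) as [n Hn].
  assert (Hd := der_desc 0 (I 0%nat + del/2) ltac:(lra)).
  apply (per_der_n n) in Hd.
  destruct (proj1 (s_iff _ _ _ _ _ H _ _ Hd) eq_refl) as [k Hk].
  exists k. unfold in_Ival in Hk. lra.
Qed.

Definition isnext y z := (exists k, I k = z) /\ y <= z /\ forall k, y <= I k -> z <= I k.

Lemma next_ex y : exists z, isnext y z.
Proof.
  pose proof (s_del _ _ _ _ _ H).
  set (E := fun r => exists k, y <= I k /\ r = - I k).
  assert (bE : bound E). { exists (-y). intros r [k [Hk ->]]. lra. }
  assert (nE : exists r, E r). { destruct (exists_start_above y) as [k Hk]. exists (- I k). exists k. auto. }
  destruct (completeness E bE nE) as [m [Hub Hlub]].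
  assert (exists k, y <= I k /\ I k < - m + del).
  { apply NNPP. intros Hn. assert (is_upper_bound E (m - del)).
    { intros r [k [Hk ->]]. destruct (Rlt_or_le (I k) (-m + del)).
      exfalso; apply Hn; eauto. lra. }
    specialize (Hlub _ H1). lra. }
  destruct H1 as [k [Hk1 Hk2]].
  exists (I k). split; eauto. split; auto. intros k' Hk'.
  assert (- I k' <= m) by (apply Hub; exists k'; auto).
  destruct (Rle_or_lt (I k) (I k')) as [h|h]; auto.
  assert (k <> k') by (intro; subst; lra).
  pose proof (sep_dist k k' H2). rewrite Rabs_right in H3 by lra. lra.
Qed.

End S.

Definition nxt (I : nat -> R) (y : R) : R :=
  epsilon (inhabits 0) (fun z => (exists k, I k = z) /\ y <= z /\ forall k, y <= I k -> z <= I k).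

Lemma nxt_spec Lam del T u I (H : setting Lam del T u I) y : isnext I y (nxt I y).
Proof. unfold nxt. apply epsilon_spec. apply (next_ex Lam del T u I H). Qed.


Fixpoint sq (I : nat -> R) (del s0 : R) (n : nat) : R :=
  match n with O => s0 | S n => nxt I (sq I del s0 n + del) end.

Section S3.
Context (Lam del T : R) (u : R -> R) (I : nat -> R) (H : setting Lam del T u I).

Lemma exists_der1 : exists x, derivable_pt_lim u x 1.
Proof.
  pose proof (s_T _ _ _ _ _ H). pose proof (s_Lam _ _ _ _ _ H).
  apply NNPP. intros Hn.
  assert (u T = u 0 + (- Lam) * (T - 0)).
  { apply (PA_slope u 0 T (-Lam) (s_pa _ _ _ _ _ H)); try lra.
    intros t l Ht Hl. destruct (s_der _ _ _ _ _ H t l Hl); auto. subst. exfalso; eauto. }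
  pose proof (per_pt Lam del T u I H 0). rewrite Rplus_0_l in H3. nra.
Qed.

Lemma der1_notin x : derivable_pt_lim u x 1 -> forall k, ~ in_Ival del (I k) x.
Proof.
  intros Hd k Hk. pose proof (s_Lam _ _ _ _ _ H).
  assert (1 = - Lam) by (apply (s_iff _ _ _ _ _ H x 1 Hd); eauto). lra.
Qed.

Lemma shift_start x s : free del I x s -> x < s -> (exists j, I j = s) ->
  exists j', I j' = s + T.
Proof.
  intros Hf Hxs [j Hj]. pose proof (s_del _ _ _ _ _ H).
  assert (HfT : free del I (x + T) (s + T)).
  { apply (free_of_der1 Lam del T u I H). intros t Ht.
    replace t with ((t - T) + T) by ring. apply (per_der Lam del T u I H).
    apply (der_free Lam del T u I H x s); auto; lra. }
  assert (Hp : forall eps, 0 < eps < del -> exists k, s + T <= I k <= s + T + eps).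
  { intros eps He.
    assert (Hd := der_desc Lam del T u I H j (s + eps) ltac:(lra)).
    apply (per_der Lam del T u I H) in Hd.
    destruct (proj1 (s_iff _ _ _ _ _ H _ _ Hd) eq_refl) as [k Hk].
    exists k. unfold in_Ival in Hk. split; [|lra].
    destruct (Rle_or_lt (s + T) (I k)); auto. exfalso.
    apply (HfT ((Rmax (I k) (x + T) + (s + T))/2)) with k.
    - split; [|apply Rmax_case_strong; lra]. pose proof (Rmax_r (I k) (x+T)). lra.
    - unfold in_Ival. pose proof (Rmax_l (I k) (x+T)). split; [lra|].
      apply Rmax_case_strong; lra. }
  destruct (Hp (del/2) ltac:(lra)) as [k1 Hk1].
  destruct (Req_dec (I k1) (s + T)) as [E|E]. eauto.
  exfalso. set (d := I k1 - (s + T)).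
  destruct (Hp (d/2) ltac:(unfold d; lra)) as [k2 Hk2].
  assert (k1 <> k2) by (intro; subst; unfold d in *; lra).
  pose proof (sep_dist Lam del T u I H k1 k2 H1). rewrite Rabs_right in H2 by (unfold d in *; lra).
  unfold d in *. lra.
Qed.

Lemma start_after_start j y : del + I j <= y -> forall k, y <= I k -> True. Proof. auto. Qed.

Lemma sq_props s0 : (exists k, I k = s0) -> forall n,
  (exists k, I k = sq I del s0 n) /\ sq I del s0 n + del <= sq I del s0 (S n) /\
  free del I (sq I del s0 n + del) (sq I del s0 (S n)).
Proof.
  intros H0 n. pose proof (s_del _ _ _ _ _ H).
  assert (Hst : forall n, exists k, I k = sq I del s0 n).
  { destruct n0; simpl; auto. destruct (nxt_spec Lam del T u I H (sq I del s0 n0 + del)) as [A _]; auto. }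
  destruct (nxt_spec Lam del T u I H (sq I del s0 n + del)) as [[k Hk] [B C]].
  simpl. split; auto. split; auto.
  intros t Ht k' Hk'. unfold in_Ival in Hk'.
  destruct (Rle_or_lt (sq I del s0 n + del) (I k')).
  - specialize (C k' H2). lra.
  - destruct (Hst n) as [j Hj].
    destruct (Nat.eq_dec k' j). subst. lra.
    pose proof (sep_dist Lam del T u I H k' j n0). rewrite Hj in H3.
    destruct (Rle_or_lt (I k') (sq I del s0 n)).
    + rewrite Rabs_left1 in H3 by lra. lra.
    + rewrite Rabs_right in H3 by lra. lra.
Qed.

Lemma sq_lb s0 : (exists k, I k = s0) -> forall n, s0 + INR n * del <= sq I del s0 n.
Proof.
  intros H0 n. induction n. simpl; lra.
  destruct (sq_props s0 H0 n) as [_ [A _]]. rewrite S_INR. lra.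
Qed.

Lemma sq_reach s0 : (exists k, I k = s0) -> (exists j, I j = s0 + T) ->
  exists N, sq I del s0 N = s0 + T.
Proof.
  intros H0 [j Hj]. pose proof (s_del _ _ _ _ _ H). pose proof (s_T _ _ _ _ _ H).
  set (P := fun n => sq I del s0 n <= s0 + T).
  assert (exists N, P N /\ ~ P (S N)).
  { apply NNPP. intros Hn.
    assert (forall n, P n).
    { induction n. unfold P; simpl; lra. apply NNPP. intro. apply Hn. eauto. }
    destruct (INR_archimed del (T) H1) as [m Hm].
    specialize (H3 m). pose proof (sq_lb s0 H0 m). unfold P in H3. lra. }
  destruct H3 as [N [HP HnP]]. exists N. unfold P in *.
  destruct (Req_dec (sq I del s0 N) (s0 + T)); auto. exfalso. apply HnP.
  destruct (sq_props s0 H0 N) as [[k Hk] _].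
  assert (k <> j) by (intro; subst; lra).
  pose proof (sep_dist Lam del T u I H k j H4). rewrite Hk, Hj, Rabs_left1 in H5 by lra.
  simpl. destruct (nxt_spec Lam del T u I H (sq I del s0 N + del)) as [_ [_ C]].
  rewrite <- Hj. apply C. lra.
Qed.

Lemma exists_good_start : exists s0, (exists k, I k = s0) /\ exists N, sq I del s0 N = s0 + T.
Proof.
  destruct exists_der1 as [x1 Hx1].
  pose proof (der1_notin x1 Hx1) as Hn.
  destruct (nxt_spec Lam del T u I H x1) as [[k Hk] [B C]].
  set (s0 := nxt I x1) in *.
  assert (x1 < s0). { destruct B; auto. exfalso. apply (Hn k). rewrite Hk, <- H0. unfold in_Ival.
    pose proof (s_del _ _ _ _ _ H); lra. }
  assert (free del I x1 s0).
  { intros t Ht k' Hk'. unfold in_Ival in Hk'. destruct (Rle_or_lt x1 (I k')).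
    specialize (C k' H1). lra. apply (Hn k'). unfold in_Ival. lra. }
  exists s0. split; eauto. apply sq_reach; eauto.
  apply (shift_start x1 s0); eauto.
Qed.

End S3.


Lemma int_aff a b c m : m <> 0 ->
  is_RInt (fun x => (c + m*(x - a))^2) a b (((c + m*(b-a))^3 - c^3)/(3*m)).
Proof.
  intros Hm.
  assert (E : ((c + m*(b-a))^3 - c^3)/(3*m) =
     minus ((fun x => (c + m*(x-a))^3/(3*m)) b) ((fun x => (c + m*(x-a))^3/(3*m)) a)).
  { unfold minus, plus, opp; simpl. field. auto. }
  rewrite E. apply (is_RInt_derive (fun x => (c + m*(x-a))^3/(3*m)) (fun x => (c + m*(x - a))^2)).
  - intros x _. auto_derive; auto. field. auto.
  - intros x _. apply (ex_derive_continuous (fun x => (c + m*(x - a))^2)). auto_derive. auto.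
Qed.

Lemma cont_sq (u : R -> R) : continuity u -> forall x, continuous (fun x => u x ^ 2) x.
Proof.
  intros Hc x. apply continuity_pt_filterlim.
  change (continuity_pt (fun x => u x * (u x * 1)) x).
  apply continuity_pt_mult. apply Hc. apply continuity_pt_mult. apply Hc.
  apply continuity_pt_const. intros a b; auto.
Qed.

Lemma RInt_period (f : R -> R) T a : (forall x, f (x+T) = f x) -> (forall x, continuous f x) ->
  RInt f 0 T = RInt f a (a+T).
Proof.
  intros Hp Hc.
  assert (Ex : forall p q, ex_RInt f p q) by (intros; apply (@ex_RInt_continuous R_CompleteNormedModule); auto).
  pose proof (RInt_Chasles f 0 a (a+T) (Ex _ _) (Ex _ _)).
  pose proof (RInt_Chasles f 0 T (a+T) (Ex _ _) (Ex _ _)).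
  pose proof (RInt_comp_lin f 1 T 0 a (Ex _ _)).
  replace (1*0+T) with T in H1 by ring. replace (1*a+T) with (a+T) in H1 by ring.
  match type of H1 with ?X = _ => assert (H2 : X = RInt f 0 a) end.
  { apply RInt_ext. intros x _. unfold scal; simpl. unfold mult; simpl. rewrite !Rmult_1_l. auto. }
  rewrite <- H1, H2 in H0. unfold plus in *; simpl in *. lra.
Qed.

Fixpoint sumsq (f : nat -> R) (n : nat) : R :=
  match n with O => 0 | S n => sumsq f n + (f n)^2 end.

Lemma sumsq_nonneg f n : 0 <= sumsq f n.
Proof. induction n; simpl; nra. Qed.

Lemma sumsq_zero f n : sumsq f n <= 0 -> forall j, (j < n)%nat -> f j = 0.
Proof.
  induction n; intros Hs j Hj. lia. simpl in Hs. pose proof (sumsq_nonneg f n).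
  assert (f n ^2 = 0) by nra. assert (sumsq f n <= 0) by nra.
  destruct (Nat.eq_dec j n). subst. nra. apply IHn; auto. lia.
Qed.

Definition Kc (Lam del : R) := (Lam*del)^2/12.

Section S4.
Context (Lam del T : R) (u : R -> R) (I : nat -> R) (H : setting Lam del T u I).

Lemma seg_desc s0 n x : (exists k, I k = s0) ->
  sq I del s0 n <= x <= sq I del s0 n + del ->
  u x = u (sq I del s0 n) - Lam * (x - sq I del s0 n).
Proof.
  intros H0 Hx. destruct (sq_props Lam del T u I H s0 H0 n) as [[k Hk] _].
  rewrite <- Hk in *. apply (desc Lam del T u I H). auto.
Qed.

Lemma seg_asc s0 n x : (exists k, I k = s0) ->
  sq I del s0 n + del <= x <= sq I del s0 (S n) ->
  u x = u (sq I del s0 n) - Lam * del + (x - sq I del s0 n - del).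
Proof.
  intros H0 Hx. destruct (sq_props Lam del T u I H s0 H0 n) as [_ [A B]].
  pose proof (s_del _ _ _ _ _ H).
  assert (Hd : u (sq I del s0 n + del) = u (sq I del s0 n) - Lam * del).
  { rewrite (seg_desc s0 n) by (auto; lra). ring. }
  destruct (Req_dec x (sq I del s0 n + del)). subst. rewrite Hd. ring.
  rewrite (asc Lam del T u I H (sq I del s0 n + del) (sq I del s0 (S n)) x B) by lra.
  rewrite Hd. ring.
Qed.

Lemma int_upto s0 : (exists k, I k = s0) -> forall n,
  let h := fun j => u (sq I del s0 j) in
  sq I del s0 n - s0 = INR n * (1 + Lam) * del + h n - h 0%nat /\
  is_RInt (fun x => u x ^ 2) s0 (sq I del s0 n)
    ((1+Lam)*del*(sumsq (fun j => h j - Lam*del/2) n + INR n * Kc Lam del) + (h n ^3 - h 0%nat ^3)/3).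
Proof.
  intros H0 n h. pose proof (s_del _ _ _ _ _ H). pose proof (s_Lam _ _ _ _ _ H).
  induction n.
  - split. simpl; lra.
    match goal with |- is_RInt _ _ _ ?v => replace v with 0 by (simpl; field) end.
    simpl. apply (@is_RInt_point R_NormedModule).
  - destruct IHn as [E1 E2].
    destruct (sq_props Lam del T u I H s0 H0 n) as [_ [A B]].
    set (s := sq I del s0 n) in *. set (s' := sq I del s0 (S n)) in *.
    assert (Hs' : h (S n) = h n - Lam * del + (s' - s - del)).
    { unfold h. fold s'. rewrite (seg_asc s0 n s') by (auto; fold s s'; lra). fold s. ring. }
    split. { rewrite S_INR. lra. }
    assert (D : is_RInt (fun x => u x ^ 2) s (s + del) (((h n + (-Lam)*((s+del)-s))^3 - h n^3)/(3*(-Lam)))).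
    { apply (is_RInt_ext (fun x => (h n + (-Lam)*(x - s))^2)).
      - intros x Hx. rewrite Rmin_left in Hx by lra. rewrite Rmax_right in Hx by lra.
        unfold h. rewrite (seg_desc s0 n x) by (auto; fold s; lra). fold s. f_equal. ring.
      - apply int_aff. lra. }
    assert (Ac : is_RInt (fun x => u x ^ 2) (s + del) s' (((h n - Lam*del + 1*(s'-(s+del)))^3 - (h n - Lam*del)^3)/(3*1))).
    { apply (is_RInt_ext (fun x => (h n - Lam*del + 1*(x - (s+del)))^2)).
      - intros x Hx. rewrite Rmin_left in Hx by lra. rewrite Rmax_right in Hx by lra.
        unfold h. rewrite (seg_asc s0 n x) by (auto; fold s s'; lra). fold s. f_equal. ring.
      - apply int_aff. lra. }
    pose proof (is_RInt_Chasles _ _ _ _ _ _ E2 D) as C1.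
    pose proof (is_RInt_Chasles _ _ _ _ _ _ C1 Ac) as C2.
    fold s'. match type of C2 with is_RInt _ _ _ ?v => match goal with |- is_RInt _ _ _ ?w =>
      replace w with v; [exact C2|] end end.
    rewrite S_INR. change (sumsq ?f (S n)) with (sumsq f n + f n ^2). unfold plus; simpl. rewrite Hs'. unfold Kc. field. lra.
Qed.
End S4.


Lemma frac_char z (k : Z) : IZR k <= z < IZR k + 1 -> frac_part z = z - IZR k.
Proof.
  intros Hz. unfold frac_part, Int_part.
  assert (up z = (k + 1)%Z). { symmetry. apply tech_up; rewrite plus_IZR; simpl; lra. }
  rewrite H, minus_IZR, plus_IZR. simpl. ring.
Qed.

Section U.
Context (Lam del : R) (HL : 0 < Lam) (Hd : 0 < del).
Let P := (Lam + 1) * del.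

Lemma P_pos : 0 < P. Proof. unfold P; nra. Qed.

Lemma red_char y (k : Z) : IZR k * P - del < y <= IZR k * P + Lam * del ->
  ubar_red Lam del y = y - IZR k * P.
Proof.
  intros Hy. unfold ubar_red. fold P. pose proof P_pos.
  rewrite (frac_char _ (- k)).
  - rewrite opp_IZR. field. lra.
  - rewrite opp_IZR. split.
    + apply (Rmult_le_reg_r P); auto. unfold Rdiv. rewrite Rmult_assoc, Rinv_l by lra. unfold P in *; nra.
    + apply (Rmult_lt_reg_r P); auto. unfold Rdiv. rewrite Rmult_assoc, Rinv_l by lra. unfold P in *; nra.
Qed.

Lemma U_desc y (k : Z) : IZR k * P - del <= y <= IZR k * P -> ubar Lam del y = - Lam * (y - IZR k * P).
Proof.
  intros Hy. unfold ubar.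
  destruct (Req_dec y (IZR k * P - del)).
  - rewrite (red_char y (k - 1)).
    + rewrite minus_IZR. simpl. subst y. unfold P in *. destruct (Rlt_dec _ _). nra. ring.
    + rewrite minus_IZR. simpl. subst y. unfold P in *. split; nra.
  - rewrite (red_char y k) by (split; [lra| nra]). destruct (Rlt_dec _ _). ring. assert (y = IZR k * P) by lra.
    subst. ring.
Qed.

Lemma U_asc y (k : Z) : IZR k * P <= y <= IZR k * P + Lam * del -> ubar Lam del y = y - IZR k * P.
Proof.
  intros Hy. unfold ubar. rewrite (red_char y k) by lra. destruct (Rlt_dec _ _). lra. auto.
Qed.

Lemma cover y : exists k : Z, IZR k * P - del <= y <= IZR k * P + Lam * del.
Proof.
  pose proof P_pos. destruct (archimed ((y + del)/P)) as [A B].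
  exists (up ((y+del)/P) - 1)%Z. rewrite minus_IZR. simpl.
  set (r := IZR (up ((y + del) / P))) in *.
  assert (r * P > y + del).
  { apply Rmult_gt_compat_r with (r := P) in A; auto. unfold Rdiv in A. rewrite Rmult_assoc, Rinv_l in A by lra. lra. }
  assert (r * P <= y + del + P).
  { assert (Hr : r <= (y+del)/P + 1) by lra. apply Rmult_le_compat_r with (r := P) in Hr; [|lra].
    unfold Rdiv in Hr. rewrite Rmult_plus_distr_r, Rmult_assoc, Rinv_l in Hr by lra. lra. }
  unfold P in *. nra.
Qed.

Lemma ubar_per y : ubar Lam del (y + P) = ubar Lam del y.
Proof.
  destruct (cover y) as [k Hk].
  destruct (Rle_or_lt y (IZR k * P)).
  - rewrite (U_desc y k) by lra. rewrite (U_desc (y+P) (k+1)) by (rewrite plus_IZR; simpl; lra).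
    rewrite plus_IZR. simpl. ring.
  - rewrite (U_asc y k) by lra. rewrite (U_asc (y+P) (k+1)) by (rewrite plus_IZR; simpl; lra).
    rewrite plus_IZR. simpl. ring.
Qed.

Lemma ubar_per_n n y : ubar Lam del (y + INR n * P) = ubar Lam del y.
Proof.
  induction n. simpl. rewrite Rmult_0_l, Rplus_0_r. auto.
  rewrite S_INR. replace (y + (INR n + 1) * P) with ((y + INR n * P) + P) by ring.
  rewrite ubar_per. auto.
Qed.

Lemma ubar_bound y : 0 <= ubar Lam del y <= Lam * del.
Proof.
  destruct (cover y) as [k Hk].
  destruct (Rle_or_lt y (IZR k * P)).
  - rewrite (U_desc y k) by lra. nra.
  - rewrite (U_asc y k) by lra. lra.
Qed.

End U.


Lemma cont_two_sided (w : R -> R) x eta m1 c1 m2 c2 : 0 < eta ->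
  (forall y, x - eta <= y <= x -> w y = m1*y + c1) ->
  (forall y, x <= y <= x + eta -> w y = m2*y + c2) -> continuity_pt w x.
Proof.
  intros He H1 H2 eps Heps.
  set (M := Rabs m1 + Rabs m2 + 1).
  assert (0 < M) by (unfold M; pose proof (Rabs_pos m1); pose proof (Rabs_pos m2); lra).
  exists (Rmin eta (eps / M)). split. apply Rmin_pos; auto. apply Rdiv_lt_0_compat; auto.
  intros y [_ Hy]. simpl in *. unfold Rdist in *.
  assert (Hy1 : Rabs (y - x) < eta) by (eapply Rlt_le_trans; [exact Hy|apply Rmin_l]).
  assert (Hy2 : Rabs (y - x) < eps / M) by (eapply Rlt_le_trans; [exact Hy|apply Rmin_r]).
  assert (Hy3 : Rabs (y - x) * M < eps).
  { apply (Rmult_lt_compat_r M) in Hy2; auto. unfold Rdiv in Hy2. rewrite Rmult_assoc, Rinv_l in Hy2; lra. }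
  destruct (Rabs_def2 _ _ Hy1).
  assert (Rabs m1 <= M) by (unfold M; pose proof (Rabs_pos m2); lra).
  assert (Rabs m2 <= M) by (unfold M; pose proof (Rabs_pos m1); lra).
  pose proof (Rabs_pos (y - x)).
  destruct (Rle_or_lt y x).
  - rewrite (H1 y), (H1 x) by lra. replace (m1*y+c1 - (m1*x+c1)) with (m1*(y-x)) by ring.
    rewrite Rabs_mult. nra.
  - rewrite (H2 y), (H2 x) by lra. replace (m2*y+c2 - (m2*x+c2)) with (m2*(y-x)) by ring.
    rewrite Rabs_mult. nra.
Qed.

Definition PAon (u : R -> R) a b := exists (n : nat) (t : nat -> R),
      t 0%nat = a /\ t n = b /\
      (forall i, (i < n)%nat -> t i < t (S i)) /\
      (forall i, (i < n)%nat -> exists m c,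
          forall x, t i <= x <= t (S i) -> u x = m * x + c).

Lemma PAon_aff u a b m c : a < b -> (forall x, a <= x <= b -> u x = m*x + c) -> PAon u a b.
Proof.
  intros Hab Hu. exists 1%nat, (fun i => match i with O => a | _ => b end).
  split; auto. split; auto. split.
  - intros i Hi. destruct i; [auto| lia].
  - intros i Hi. destruct i; [|lia]. exists m, c. auto.
Qed.

Lemma PAon_glue u a b c : PAon u a b -> PAon u b c -> PAon u a c.
Proof.
  intros [n1 [t1 [A1 [B1 [C1 D1]]]]] [n2 [t2 [A2 [B2 [C2 D2]]]]].
  exists (n1 + n2)%nat, (fun i => if (i <=? n1)%nat then t1 i else t2 (i - n1)%nat).
  assert (E : forall i, (n1 <= i)%nat -> (if (i <=? n1)%nat then t1 i else t2 (i - n1)%nat) = t2 (i - n1)%nat).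
  { intros i Hi. destruct (Nat.leb_spec i n1). replace i with n1 by lia. rewrite Nat.sub_diag. congruence. auto. }
  split. simpl. auto. split.
  { rewrite E by lia. replace (n1 + n2 - n1)%nat with n2 by lia. auto. }
  split.
  - intros i Hi. destruct (Nat.lt_ge_cases i n1).
    + destruct (Nat.leb_spec i n1); [|lia]. destruct (Nat.leb_spec (S i) n1); [|lia]. auto.
    + rewrite !E by lia. replace (S i - n1)%nat with (S (i - n1)) by lia. apply C2. lia.
  - intros i Hi. destruct (Nat.lt_ge_cases i n1).
    + destruct (Nat.leb_spec i n1); [|lia]. destruct (Nat.leb_spec (S i) n1); [|lia]. auto.
    + rewrite !E by lia. replace (S i - n1)%nat with (S (i - n1)) by lia. apply D2. lia.
Qed.

Lemma PA_of_local u th : 0 < th -> (forall a b, a < b <= a + th -> PAon u a b) -> piecewise_affine u.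
Proof.
  intros Hth Hl.
  assert (forall n a b, a < b <= a + INR n * th -> PAon u a b).
  { induction n; intros a b Hab. simpl in Hab; lra.
    rewrite S_INR in Hab. destruct (Rle_or_lt b (a + th)). apply Hl; lra.
    apply PAon_glue with (a + th). apply Hl; lra. apply IHn. lra. }
  intros a b Hab. destruct (INR_archimed th (b - a) Hth) as [n Hn].
  apply (H n). lra.
Qed.


Section W.
Context (Lam del x0 : R) (HL : 0 < Lam) (Hd : 0 < del).
Let P := (Lam + 1) * del.
Let w := fun x => ubar Lam del (x - x0) - Lam * del / 2.
Definition Dz (k : Z) x := IZR k * ((Lam+1)*del) - del <= x - x0 <= IZR k * ((Lam+1)*del).

Lemma Pp : 0 < P. Proof. unfold P; nra. Qed.

Lemma W_desc k x : IZR k*P - del <= x - x0 <= IZR k*P ->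
  w x = -Lam * x + (Lam*(x0 + IZR k*P) - Lam*del/2).
Proof. intros. unfold w. rewrite (U_desc Lam del HL Hd _ k) by auto. unfold P. ring. Qed.

Lemma W_asc k x : IZR k*P <= x - x0 <= IZR k*P + Lam*del ->
  w x = 1 * x + (-(x0+IZR k*P) - Lam*del/2).
Proof. intros. unfold w. rewrite (U_asc Lam del HL Hd _ k) by auto. unfold P. ring. Qed.

Lemma not_D k z : IZR k * P < z - x0 < IZR k * P + Lam * del -> forall j, ~ Dz j z.
Proof.
  intros Hz j Hj. unfold Dz in Hj. fold P in Hj. pose proof Pp.
  assert (IZR j * P < (IZR k + 1) * P) by (unfold P in *; nra).
  assert (IZR j < IZR k + 1) by (apply (Rmult_lt_reg_r P); auto).
  rewrite <- plus_IZR in H1. apply lt_IZR in H1.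
  assert (IZR j <= IZR k) by (apply IZR_le; lia).
  assert (IZR j * P <= IZR k * P) by (apply Rmult_le_compat_r; lra). lra.
Qed.

Ltac wclose k := first [ (intros; exfalso; lra)
  | (intros y Hy; apply W_desc; (lra || (rewrite ?plus_IZR, ?minus_IZR; simpl; unfold P in *; nra)))
  | (intros y Hy; apply W_asc; (lra || (rewrite ?plus_IZR, ?minus_IZR; simpl; unfold P in *; nra)))
  | (intros _ _; exists k; unfold Dz; fold P; lra)
  | (intros _ _; apply not_D with k; lra) ].

Lemma w_local x : exists eta m1 c1 m2 c2, 0 < eta /\ (m1 = 1 \/ m1 = -Lam) /\ (m2 = 1 \/ m2 = -Lam) /\
  (forall y, x - eta <= y <= x -> w y = m1*y + c1) /\ (forall y, x <= y <= x + eta -> w y = m2*y+c2) /\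
  (m1 = -Lam -> m2 = -Lam -> exists k, Dz k x) /\ (m1 = 1 -> m2 = 1 -> forall k, ~ Dz k x).
Proof.
  pose proof Pp. destruct (cover Lam del HL Hd (x - x0)) as [k Hk]. fold P in Hk.
  assert (HLd : 0 < Lam * del) by nra.
  destruct (Rlt_or_le (x - x0) (IZR k * P)).
  - destruct (Rlt_or_le (IZR k * P - del) (x - x0)).
    +
      set (eta := Rmin (x - x0 - (IZR k * P - del)) (IZR k * P - (x - x0))).
      assert (0 < eta) by (apply Rmin_pos; lra).
      assert (eta <= x - x0 - (IZR k * P - del)) by apply Rmin_l.
      assert (eta <= IZR k * P - (x - x0)) by apply Rmin_r.
      exists eta, (-Lam), (Lam*(x0 + IZR k*P) - Lam*del/2), (-Lam), (Lam*(x0 + IZR k*P) - Lam*del/2).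
      repeat split; auto; try lra. all: try wclose k.
    + (* x - x0 = kP - del : left ascent of k-1, right descent of k *)
      assert (E : x - x0 = IZR k * P - del) by lra.
      set (eta := Rmin del (Lam * del)).
      assert (0 < eta) by (apply Rmin_pos; lra).
      assert (eta <= del) by apply Rmin_l. assert (eta <= Lam*del) by apply Rmin_r.
      exists eta, 1, (-(x0+IZR (k-1)*P) - Lam*del/2), (-Lam), (Lam*(x0 + IZR k*P) - Lam*del/2).
      repeat split; auto; try lra. all: try wclose k.
  - destruct (Rlt_or_le (x - x0) (IZR k * P + Lam * del)).
    + destruct (Rlt_or_le (IZR k * P) (x - x0)).
      *
        set (eta := Rmin (x - x0 - IZR k * P) (IZR k * P + Lam*del - (x - x0))).
        assert (0 < eta) by (apply Rmin_pos; lra).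
        assert (eta <= x - x0 - IZR k * P) by apply Rmin_l.
        assert (eta <= IZR k * P + Lam*del - (x - x0)) by apply Rmin_r.
        exists eta, 1, (-(x0+IZR k*P) - Lam*del/2), 1, (-(x0+IZR k*P) - Lam*del/2).
        repeat split; auto; try lra. all: try wclose k.
      *
        assert (E : x - x0 = IZR k * P) by lra.
        set (eta := Rmin del (Lam * del)).
        assert (0 < eta) by (apply Rmin_pos; lra).
        assert (eta <= del) by apply Rmin_l. assert (eta <= Lam*del) by apply Rmin_r.
        exists eta, (-Lam), (Lam*(x0 + IZR k*P) - Lam*del/2), 1, (-(x0+IZR k*P) - Lam*del/2).
        repeat split; auto; try lra. all: try wclose k.
    +
      assert (E : x - x0 = IZR k * P + Lam * del) by lra.
      set (eta := Rmin del (Lam * del)).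
      assert (0 < eta) by (apply Rmin_pos; lra).
      assert (eta <= del) by apply Rmin_l. assert (eta <= Lam*del) by apply Rmin_r.
      exists eta, 1, (-(x0+IZR k*P) - Lam*del/2), (-Lam), (Lam*(x0 + IZR (k+1)*P) - Lam*del/2).
      repeat split; auto; try lra. all: try wclose k.
Qed.

Lemma w_cont : continuity w.
Proof.
  intros x. destruct (w_local x) as [eta [m1 [c1 [m2 [c2 [He [_ [_ [A [B _]]]]]]]]]].
  eapply cont_two_sided; eauto.
Qed.

Lemma w_der x l : derivable_pt_lim w x l -> (l = 1 \/ l = -Lam) /\
  (l = - Lam <-> exists k, Dz k x).
Proof.
  intros Hdl. destruct (w_local x) as [eta [m1 [c1 [m2 [c2 [He [Hm1 [Hm2 [A [B [C D]]]]]]]]]]].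
  assert (l = m1) by (eapply deriv_left; eauto).
  assert (l = m2) by (eapply deriv_right; eauto). subst. split; auto.
  split. intros E. apply C; congruence.
  intros [k Hk]. destruct Hm1; auto. exfalso. exact (D H H k Hk).
Qed.

Lemma w_pa : piecewise_affine w.
Proof.
  pose proof Pp. assert (HLd : 0 < Lam * del) by nra.
  apply (PA_of_local w (Rmin del (Lam*del))). apply Rmin_pos; lra.
  intros a b Hab. assert (Rmin del (Lam*del) <= del) by apply Rmin_l.
  assert (Rmin del (Lam*del) <= Lam*del) by apply Rmin_r.
  destruct (cover Lam del HL Hd (a - x0)) as [k Hk]. fold P in Hk.
  destruct (Rlt_or_le (a - x0) (IZR k * P)).
  - destruct (Rle_or_lt b (x0 + IZR k * P)).
    + eapply PAon_aff. lra. intros x Hx. apply (W_desc k). lra.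
    + apply PAon_glue with (x0 + IZR k * P).
      * eapply PAon_aff. lra. intros x Hx. apply (W_desc k). lra.
      * eapply PAon_aff. lra. intros x Hx. apply (W_asc k). lra.
  - destruct (Rlt_or_le (a - x0) (IZR k * P + Lam*del)).
    + destruct (Rle_or_lt b (x0 + IZR k * P + Lam * del)).
      * eapply PAon_aff. lra. intros x Hx. apply (W_asc k). lra.
      * apply PAon_glue with (x0 + IZR k * P + Lam * del).
        -- eapply PAon_aff. lra. intros x Hx. apply (W_asc k). lra.
        -- eapply PAon_aff. lra. intros x Hx. apply (W_desc (k+1)). rewrite plus_IZR; simpl. unfold P in *. lra.
    + eapply PAon_aff. lra. intros x Hx. apply (W_desc (k+1)). rewrite plus_IZR; simpl. unfold P in *. lra.
Qed.

End W.


Definition zz (n : nat) : Z := if Nat.even n then Z.of_nat (Nat.div2 n) else (- Z.of_nat (S (Nat.div2 n)))%Z.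

Lemma zz_inj i j : zz i = zz j -> i = j.
Proof.
  unfold zz. pose proof (Nat.div2_odd i). pose proof (Nat.div2_odd j).
  rewrite <- Nat.negb_even in H, H0.
  destruct (Nat.even i), (Nat.even j); simpl in *; intros; lia.
Qed.

Lemma zz_surj k : exists n, zz n = k.
Proof.
  unfold zz. destruct (Z.le_gt_cases 0 k).
  - exists (2 * Z.to_nat k)%nat. rewrite Nat.even_mul, Nat.div2_double. simpl. lia.
  - exists (S (2 * (Z.to_nat (-k) - 1)))%nat. rewrite Nat.even_succ, <- Nat.negb_even, Nat.even_mul.
    rewrite Nat.div2_succ_double. simpl. lia.
Qed.

Section W2.
Context (Lam del x0 : R) (HL : 0 < Lam) (Hd : 0 < del).

Lemma Dz_unique a b x : Dz Lam del x0 a x -> Dz Lam del x0 b x -> a = b.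
Proof.
  unfold Dz. intros Ha Hb. set (P := (Lam+1)*del) in *.
  assert (0 < P) by (unfold P; nra).
  assert (IZR a * P < (IZR b + 1) * P) by (unfold P in *; nra).
  assert (IZR b * P < (IZR a + 1) * P) by (unfold P in *; nra).
  assert (IZR a < IZR b + 1) by (apply (Rmult_lt_reg_r P); auto).
  assert (IZR b < IZR a + 1) by (apply (Rmult_lt_reg_r P); auto).
  rewrite <- plus_IZR in H2, H3. apply lt_IZR in H2. apply lt_IZR in H3. lia.
Qed.

Lemma w_adm L : admissible (INR L * (Lam + 1) * del) Lam del (fun x => ubar Lam del (x - x0) - Lam * del / 2).
Proof.
  split; [|split; [|split; [|split]]].
  - apply w_cont; auto.
  - intros x. replace (x + INR L * (Lam + 1) * del - x0) with ((x - x0) + INR L * ((Lam+1)*del)) by ring.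
    rewrite ubar_per_n; auto.
  - apply w_pa; auto.
  - intros x l Hl. apply (w_der Lam del x0 HL Hd x l Hl).
  - exists (fun n => x0 + IZR (zz n) * ((Lam+1)*del) - del). split.
    + intros i j Hij x y Hi Hj _ _. exfalso. apply Hij. apply zz_inj.
      apply (Dz_unique _ _ x); unfold Dz, in_Ival in *; lra.
    + intros x l Hl. destruct (w_der Lam del x0 HL Hd x l Hl) as [_ E]. rewrite E.
      split.
      * intros [k Hk]. destruct (zz_surj k) as [n Hn]. exists n. rewrite Hn. unfold Dz, in_Ival in *. lra.
      * intros [n Hn]. exists (zz n). unfold Dz, in_Ival in *. lra.
Qed.

End W2.


Lemma sumsq_of_zero f n : (forall j, (j < n)%nat -> f j = 0) -> sumsq f n = 0.
Proof. induction n; intros Hz; simpl. auto. rewrite IHn by (intros; apply Hz; lia). rewrite Hz by lia. ring. Qed.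

Lemma gen_int Lam del T u I (H : setting Lam del T u I) : exists s0 N,
  (exists k, I k = s0) /\ sq I del s0 N = s0 + T /\ T = INR N * (1 + Lam) * del /\
  RInt (fun x => u x ^ 2) 0 T =
    T * Kc Lam del + (1+Lam)*del*sumsq (fun j => u (sq I del s0 j) - Lam*del/2) N.
Proof.
  destruct (exists_good_start Lam del T u I H) as [s0 [Hs0 [N HN]]].
  exists s0, N. split; auto. split; auto.
  destruct (int_upto Lam del T u I H s0 Hs0 N) as [E1 E2]. cbv beta zeta in E1, E2.
  rewrite HN in E1, E2.
  assert (Hp : u (s0 + T) = u s0) by apply (per_pt Lam del T u I H).
  assert (Hs : sq I del s0 0 = s0) by auto. try rewrite Hs in E1, E2. rewrite Hp in E1, E2.
  split. lra.
  rewrite (RInt_period _ T s0).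
  - rewrite (is_RInt_unique _ _ _ _ E2). 
    assert (ET : T = INR N * (1 + Lam) * del) by lra. rewrite ET. match goal with |- ?a = ?b => change (@eq R a b) end. field.
  - intros x. rewrite (per_pt Lam del T u I H). auto.
  - apply cont_sq. apply (s_cont _ _ _ _ _ H).
Qed.

Lemma setting_of_adm Lam del T u : 0 < Lam -> 0 < del -> 0 < T -> admissible T Lam del u ->
  exists I, setting Lam del T u I.
Proof.
  intros HL Hd HT [A [B [C [D [I [E F]]]]]]. exists I. constructor; auto.
Qed.

Lemma F0_formula Lam del T u : 0 < Lam -> 0 < del -> 0 < T -> admissible T Lam del u ->
  exists I s0 N, setting Lam del T u I /\ (exists k, I k = s0) /\ sq I del s0 N = s0 + T /\
  T = INR N * (1 + Lam) * del /\
  F0 T u = Kc Lam del / 2 + (1+Lam)*del/(2*T) * sumsq (fun j => u (sq I del s0 j) - Lam*del/2) N.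
Proof.
  intros HL Hd HT Ha. destruct (setting_of_adm Lam del T u HL Hd HT Ha) as [I H].
  destruct (gen_int Lam del T u I H) as [s0 [N [A [B [C D]]]]].
  exists I, s0, N. split; [exact H|]. split; [exact A|]. split; [exact B|]. split; [exact C|]. unfold F0. rewrite D. field. lra.
Qed.

Lemma F0_lower Lam del T u : 0 < Lam -> 0 < del -> 0 < T -> admissible T Lam del u ->
  Kc Lam del / 2 <= F0 T u.
Proof.
  intros HL Hd HT Ha. destruct (F0_formula Lam del T u HL Hd HT Ha) as [I [s0 [N [_ [_ [_ [_ E]]]]]]].
  rewrite E. pose proof (sumsq_nonneg (fun j => u (sq I del s0 j) - Lam * del / 2) N).
  assert (0 <= (1 + Lam) * del / (2 * T)). { apply Rle_mult_inv_pos; nra. }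
  nra.
Qed.

Lemma F0_w Lam del L x0 : 0 < Lam -> 0 < del -> (1 <= L)%nat ->
  F0 (INR L * (Lam + 1) * del) (fun x => ubar Lam del (x - x0) - Lam * del / 2) = Kc Lam del / 2.
Proof.
  intros HL Hd HLn. set (T := INR L * (Lam + 1) * del).
  assert (HT : 0 < T). { unfold T. assert (1 <= INR L) by (apply (le_INR 1); auto). apply Rmult_lt_0_compat; [apply Rmult_lt_0_compat|]; lra. }
  set (w := fun x => ubar Lam del (x - x0) - Lam * del / 2).
  destruct (F0_formula Lam del T w HL Hd HT (w_adm Lam del x0 HL Hd L)) as [I [s0 [N [H [Hs0 [_ [_ E]]]]]]].
  rewrite E. rewrite sumsq_of_zero. ring.
  intros j _. set (s := sq I del s0 j).
  assert (Hb : forall y, - (Lam*del/2) <= w y <= Lam*del/2).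
  { intros y. unfold w. pose proof (ubar_bound Lam del HL Hd (y - x0)). lra. }
  pose proof (seg_desc Lam del T w I H s0 j (s + del) Hs0 ltac:(fold s; lra)).
  fold s in H0. pose proof (Hb s). pose proof (Hb (s + del)). nra.
Qed.

Lemma per_nat (f : R -> R) T : (forall x, f (x + T) = f x) -> forall n x, f (x + INR n * T) = f x.
Proof.
  intros Hp n. induction n; intros x. simpl. rewrite Rmult_0_l, Rplus_0_r. auto.
  rewrite S_INR. replace (x + (INR n + 1) * T) with ((x + INR n * T) + T) by ring. rewrite Hp. auto.
Qed.

Lemma per_Z (f : R -> R) T : (forall x, f (x + T) = f x) -> forall (z : Z) x, f (x + IZR z * T) = f x.
Proof.
  intros Hp z x. destruct (Z.le_gt_cases 0 z).
  - rewrite <- (Z2Nat.id z) by lia. rewrite <- INR_IZR_INZ. apply per_nat; auto.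
  - replace z with (- Z.of_nat (Z.to_nat (- z)))%Z by lia. rewrite opp_IZR, <- INR_IZR_INZ.
    rewrite <- (per_nat f T Hp (Z.to_nat (-z)) (x + - INR (Z.to_nat (- z)) * T)).
    f_equal. ring.
Qed.

Lemma per_reduce (f g : R -> R) T a : 0 < T -> (forall x, f (x + T) = f x) -> (forall x, g (x + T) = g x) ->
  (forall y, a <= y <= a + T -> f y = g y) -> forall x, f x = g x.
Proof.
  intros HT Hf Hg Hfg x.
  destruct (archimed ((x - a)/T)) as [A B].
  set (z := (up ((x - a) / T) - 1)%Z).
  assert (IZR z = IZR (up ((x - a) / T)) - 1) by (unfold z; rewrite minus_IZR; auto).
  set (r := IZR (up ((x - a) / T))) in *.
  assert (r * T > x - a).
  { apply Rmult_gt_compat_r with (r := T) in A; auto. unfold Rdiv in A. rewrite Rmult_assoc, Rinv_l in A by lra. lra. }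
  assert (r * T <= x - a + T).
  { assert (Hr : r <= (x-a)/T + 1) by lra. apply Rmult_le_compat_r with (r := T) in Hr; [|lra].
    unfold Rdiv in Hr. rewrite Rmult_plus_distr_r, Rmult_assoc, Rinv_l in Hr by lra. lra. }
  rewrite <- (per_Z f T Hf (- z) x). rewrite <- (per_Z g T Hg (- z) x).
  apply Hfg. rewrite opp_IZR, H. nra.
Qed.

Theorem theorem1p6 (Lambda delta : R) (L : nat) :
  0 < Lambda -> 0 < delta -> (1 <= L)%nat ->
  forall u : R -> R,
    is_minimizer (INR L * (Lambda + 1) * delta) Lambda delta u <->
    exists x0 : R, forall x : R,
      u x = ubar Lambda delta (x - x0) - Lambda * delta / 2.
Proof.
  intros HL Hd HLn u. set (T := INR L * (Lambda + 1) * delta).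
  assert (HT : 0 < T). { unfold T. assert (1 <= INR L) by (apply (le_INR 1); auto). apply Rmult_lt_0_compat; [apply Rmult_lt_0_compat|]; lra. }
  split.
  - intros [Ha Hmin].
    pose proof (Hmin _ (w_adm Lambda delta 0 HL Hd L)) as Hle. unfold T in Hle.
    rewrite (F0_w Lambda delta L 0 HL Hd HLn) in Hle.
    destruct (F0_formula Lambda delta T u HL Hd HT Ha) as [I [s0 [N [H [Hs0 [HN [HTN E]]]]]]].
    assert (HTp := HT). unfold T in Hle.
    assert (Hc : 0 < (1 + Lambda) * delta / (2 * T)). { apply Rdiv_lt_0_compat; nra. }
    assert (HS : sumsq (fun j => u (sq I delta s0 j) - Lambda * delta / 2) N <= 0).
    { fold T in Hle. pose proof (sumsq_nonneg (fun j => u (sq I delta s0 j) - Lambda * delta / 2) N). nra. }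
    pose proof (sumsq_zero _ _ HS) as Hz. simpl in Hz.
    assert (HN1 : (1 <= N)%nat).
    { destruct N. simpl in HTN. lra. lia. }
    assert (Hh0 : u s0 = Lambda * delta / 2).
    { specialize (Hz 0%nat ltac:(lia)). simpl in Hz. lra. }
    assert (Hsq : forall n, (n <= N)%nat -> sq I delta s0 n = s0 + INR n * ((Lambda + 1) * delta)).
    { intros n Hn. destruct (int_upto Lambda delta T u I H s0 Hs0 n) as [E1 _]. cbv beta zeta in E1.
      assert (u (sq I delta s0 n) = u s0).
      { destruct (Nat.eq_dec n N). subst n. rewrite HN. apply (per_pt Lambda delta T u I H).
        specialize (Hz n ltac:(lia)). lra. }
      simpl in E1. lra. }
    assert (HP : 0 < (Lambda + 1) * delta) by nra.
    exists (s0 + delta).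
    set (w := fun x => ubar Lambda delta (x - (s0 + delta)) - Lambda * delta / 2).
    destruct (w_adm Lambda delta (s0 + delta) HL Hd L) as [_ [Hwp _]].
    change (forall x, u x = w x).
    apply (per_reduce u w T s0 HT (per_pt Lambda delta T u I H) Hwp).
    intros y Hy.
    assert (Hcov : forall n, s0 <= y <= sq I delta s0 n -> y = s0 \/ exists j, (j < n)%nat /\ sq I delta s0 j <= y <= sq I delta s0 (S j)).
    { induction n; intros Hyn. left. simpl in Hyn. lra.
      destruct (Rle_or_lt y (sq I delta s0 n)) as [Hle2|Hlt2].
      - assert (Hpre : s0 <= y <= sq I delta s0 n) by lra.
        destruct (IHn Hpre) as [A | [j [Aj Bj]]]; auto. right. exists j. split; [lia | exact Bj].
      - right. exists n. split. lia. lra. }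
    assert (Hj : exists j, (j < N)%nat /\ sq I delta s0 j <= y <= sq I delta s0 (S j)).
    { destruct (Hcov N ltac:(rewrite HN; lra)) as [A | B]; auto.
      exists 0%nat. split. lia. rewrite (Hsq 1%nat HN1). simpl. subst y. lra. }
    destruct Hj as [j [Hj1 Hj2]].
    rewrite (Hsq j) in Hj2 by lia. rewrite (Hsq (S j)) in Hj2 by lia. rewrite S_INR in Hj2.
    assert (Hhj : u (sq I delta s0 j) = Lambda * delta / 2).
    { specialize (Hz j Hj1). lra. }
    assert (EZ : IZR (Z.of_nat j) = INR j) by (symmetry; apply INR_IZR_INZ).
    destruct (Rle_or_lt y (s0 + INR j * ((Lambda + 1) * delta) + delta)).
    + rewrite (seg_desc Lambda delta T u I H s0 j y Hs0) by (rewrite (Hsq j) by lia; lra).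
      rewrite Hhj, (Hsq j) by lia. unfold w.
      rewrite (U_desc Lambda delta HL Hd _ (Z.of_nat j)) by (rewrite EZ; lra).
      rewrite EZ. field.
    + rewrite (seg_asc Lambda delta T u I H s0 j y Hs0) by (rewrite (Hsq j), (Hsq (S j)), S_INR by lia; lra).
      rewrite Hhj, (Hsq j) by lia. unfold w.
      rewrite (U_asc Lambda delta HL Hd _ (Z.of_nat j)) by (rewrite EZ; nra).
      rewrite EZ. field.
  - intros [x0 Hx0].
    assert (Eu : u = (fun x => ubar Lambda delta (x - x0) - Lambda * delta / 2)).
    { apply functional_extensionality. auto. }
    subst u. split. apply w_adm; auto.
    intros v Hv. unfold T. rewrite (F0_w Lambda delta L x0 HL Hd HLn). apply F0_lower; auto.
Qed.
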